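(* Let $L$ be a finite-dimensional semisimple Leibniz algebra over $\mathbb{C}$ with a decomposition $L=(\oplus_{i=1}^m\mathfrak{g}_i)\ltimes(\oplus_{k=1}^n I_k)$, where $\mathfrak{g}_1,\dots,\mathfrak{g}_m$ are simple Lie subalgebras whose direct sum is a subalgebra complementary to $I$, and $I=\oplus_{k=1}^n I_k$ is a decomposition into simple $(\oplus_{i=1}^m\mathfrak{g}_i)$-submodules. Let $\mathrm{B}\Gamma$ be the bipartite graph with vertex classes $\{I_1,\dots,I_n\}$ and $\{\mathfrak{g}_1,\dots,\mathfrak{g}_m\}$, where $I_k$ and $\mathfrak{g}_i$ are joined by an edge if and only if $[I_k,\mathfrak{g}_i]=I_k$. Then $L$ is indecomposable if and only if $\mathrm{B}\Gamma$ is connected.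
   Context: A Leibniz algebra is a vector space $L$ with a bilinear bracket satisfying $[[x,y],z]=[[x,z],y]+[x,[y,z]]$. The subspace $I=\mathrm{Span}\langle [x,x]\mid x\in L\rangle$ is an ideal with $[L,I]=0$, $\mathfrak{g}_L=L/I$ is a Lie algebra, and $L$ is semisimple if $\mathfrak{g}_L$ is semisimple; then $L$ has a subalgebra isomorphic to $\mathfrak{g}_L$ complementary to $I$, and $I$ is a module over it via the right bracket $i.g=[i,g]$. For each $k,i$ one has $[I_k,\mathfrak{g}_i]\in\{I_k,\{0\}\}$. An algebra is indecomposable if it is not a direct sum $A_1\oplus A_2$ of two proper (nonzero) ideals. *)

(* Defs.v *)
From HB Require Import structures.
From mathcomp Require Import all_boot all_order all_algebra complex.
From mathcomp Require Import Rstruct.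

Set Implicit Arguments.
Unset Strict Implicit.
Unset Printing Implicit Defensive.

Import GRing.Theory.
Local Open Scope ring_scope.

Definition Cfield : fieldType := Rdefinitions.R[i].

Section LeibnizDefs.
Variables (V : vectType Cfield) (br : V -> V -> V).

Definition bilinear_br : Prop :=
  (forall (a : Cfield) (x y z : V), br (a *: x + y) z = a *: br x z + br y z) /\
  (forall (a : Cfield) (x y z : V), br z (a *: x + y) = a *: br z x + br z y).

Definition leibniz_identity : Prop :=
  forall x y z : V, br (br x y) z = br (br x z) y + br x (br y z).

(* [A,B] = Span <[a,b] | a in A, b in B> (by bilinearity it suffices to
   take a, b ranging over bases of A and B). *)
Definition brsp (A B : {vspace V}) : {vspace V} :=
  <<[seq br a b | a <- vbasis A, b <- vbasis B]>>%VS.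

Definition is_square_span (I : {vspace V}) : Prop :=
  (forall x : V, br x x \in I) /\
  (forall U : {vspace V}, (forall x : V, br x x \in U) -> (I <= U)%VS).

Definition subalgebra (A : {vspace V}) : Prop :=
  forall x y, x \in A -> y \in A -> br x y \in A.

Definition ideal (A : {vspace V}) : Prop :=
  forall x y, y \in A -> (br x y \in A) && (br y x \in A).

Definition ideal_in (g A : {vspace V}) : Prop :=
  (A <= g)%VS /\ forall x y, x \in g -> y \in A -> (br x y \in A) && (br y x \in A).

(* g is a simple Lie subalgebra: a subalgebra on which the bracket is a Lie
   bracket ([x,x] = 0, which together with the Leibniz identity gives
   anticommutativity and the Jacobi identity), non-abelian, whose only ideals
   are 0 and g. *)
Definition simple_Lie_subalgebra (g : {vspace V}) : Prop :=
  [/\ subalgebra g,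
      (forall x, x \in g -> br x x = 0),
      (exists x y, [/\ x \in g, y \in g & br x y != 0])
    & forall A, ideal_in g A -> A = 0%VS \/ A = g].

(* M is a submodule of the S-module I (I a module over S via m.s = [m,s]) *)
Definition right_submodule (S M : {vspace V}) : Prop :=
  forall x y, x \in M -> y \in S -> br x y \in M.

Definition simple_right_module (S M : {vspace V}) : Prop :=
  [/\ M != 0%VS, right_submodule S M
    & forall U : {vspace V}, (U <= M)%VS -> right_submodule S U ->
        U = 0%VS \/ U = M].

Definition indecomposable : Prop :=
  ~ exists A1 A2 : {vspace V},
      [/\ ideal A1 /\ ideal A2, A1 != 0%VS, A2 != 0%VS,
          directv (A1 + A2) & (A1 + A2)%VS = fullv].

Definition BGamma_edge (m n : nat) (g : 'I_m -> {vspace V})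
  (Ik : 'I_n -> {vspace V}) : rel ('I_n + 'I_m)%type :=
  fun u v =>
    match u, v with
    | inl k, inr i => brsp (Ik k) (g i) == Ik k
    | inr i, inl k => brsp (Ik k) (g i) == Ik k
    | _, _ => false
    end.

Definition graph_connected (T : finType) (e : rel T) : Prop :=
  forall x y : T, connect e x y.

End LeibnizDefs.

(* Main.v *)
Require Import Defs.
From HB Require Import structures.
From mathcomp Require Import all_boot all_order all_algebra complex.
From mathcomp Require Import Rstruct.
From mathcomp Require Import zify.
Set Implicit Arguments. Unset Strict Implicit.
Import GRing.Theory.
Local Open Scope ring_scope.

Definition brR (V : vectType Cfield) (br : V -> V -> V) (Hb : bilinear_br br) (x : V) : V -> V := br x.
Lemma brR_linear (V : vectType Cfield) (br : V -> V -> V) (Hb : bilinear_br br) (x : V) :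
  linear (brR Hb x).
Proof. move=> a u v; exact: (proj2 Hb). Qed.
HB.instance Definition _ (V : vectType Cfield) (br : V -> V -> V) (Hb : bilinear_br br) (x : V) :=
  GRing.isLinear.Build Cfield V V *:%R (brR Hb x) (brR_linear Hb x).

Section Basic.
Variables (V : vectType Cfield) (br : V -> V -> V).
Hypothesis Hb : bilinear_br br.

Lemma br0l z : br 0 z = 0.
Proof.
have := (proj1 Hb) 1 0 0 z; rewrite !scale1r addr0 => /(congr1 (fun t => t - br 0 z)).
by rewrite addrK subrr => /esym.
Qed.
Lemma br0r z : br z 0 = 0.
Proof.
have := (proj2 Hb) 1 0 0 z; rewrite !scale1r addr0 => /(congr1 (fun t => t - br z 0)).
by rewrite addrK subrr => /esym.
Qed.
Lemma br_addl x y z : br (x + y) z = br x z + br y z.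
Proof. by have := (proj1 Hb) 1 x y z; rewrite !scale1r. Qed.
Lemma br_addr x y z : br z (x + y) = br z x + br z y.
Proof. by have := (proj2 Hb) 1 x y z; rewrite !scale1r. Qed.
Lemma br_scalel a x z : br (a *: x) z = a *: br x z.
Proof. by have := (proj1 Hb) a x 0 z; rewrite !addr0 br0l addr0. Qed.
Lemma br_scaler a x z : br z (a *: x) = a *: br z x.
Proof. by have := (proj2 Hb) a x 0 z; rewrite !addr0 br0r addr0. Qed.

Lemma vspace_ind (A : {vspace V}) (P : V -> Prop) :
  P 0 -> (forall x y, P x -> P y -> P (x + y)) -> (forall a x, P x -> P (a *: x)) ->
  (forall x, x \in (vbasis A : seq V) -> P x) -> forall x, x \in A -> P x.
Proof.
move=> P0 PD PZ Pb x /coord_vbasis ->; apply: big_ind => // i _.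
by apply: PZ; apply: Pb; apply: mem_nth; rewrite size_tuple.
Qed.

Lemma bil_closed (A B S : {vspace V}) :
  (forall a b, a \in (vbasis A : seq V) -> b \in (vbasis B : seq V) -> br a b \in S) ->
  forall a b, a \in A -> b \in B -> br a b \in S.
Proof.
move=> H a b Ha; move: a Ha b.
apply: (vspace_ind (P := fun a => forall b, b \in B -> br a b \in S)).
- by move=> b _; rewrite br0l rpred0.
- by move=> x y Hx Hy b Hb'; rewrite br_addl rpredD ?Hx ?Hy.
- by move=> c x Hx b Hb'; rewrite br_scalel rpredZ ?Hx.
move=> x Hx; apply: vspace_ind.
- by rewrite br0r rpred0.
- by move=> y z Hy Hz; rewrite br_addr rpredD.
- by move=> c y Hy; rewrite br_scaler rpredZ.
by move=> y Hy; apply: H.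
Qed.

Lemma brsp_mem (A B : {vspace V}) a b : a \in A -> b \in B -> br a b \in brsp br A B.
Proof.
apply: bil_closed => x y Hx Hy; apply: memv_span; exact: allpairs_f.
Qed.

Lemma brsp_sub (A B S : {vspace V}) :
  (forall a b, a \in A -> b \in B -> br a b \in S) -> (brsp br A B <= S)%VS.
Proof.
move=> H; apply/span_subvP => x /allpairsP [[a b] [/= Ha Hb' ->]].
by apply: H; apply: vbasis_mem.
Qed.

Lemma add_closed (f : V -> V) (S U W : {vspace V}) :
  {morph f : x y / x + y} ->
  (forall z, z \in U -> f z \in S) -> (forall z, z \in W -> f z \in S) ->
  forall z, z \in (U + W)%VS -> f z \in S.
Proof.
move=> fD HU HW z /memv_addP [u Hu [w Hw ->]]; rewrite fD; apply: rpredD; [exact: HU | exact: HW].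
Qed.

Lemma sum_closed (J : finType) (P : pred J) (U : J -> {vspace V}) (f : V -> V) (S : {vspace V}) :
  f 0 = 0 -> {morph f : x y / x + y} ->
  (forall j, P j -> forall z, z \in U j -> f z \in S) ->
  forall z, z \in (\sum_(j | P j) U j)%VS -> f z \in S.
Proof.
move=> f0 fD H z /memv_sumP [vs Hvs ->]; rewrite (big_morph f fD f0).
by apply: rpred_sum => j Pj; apply: H Pj _ (Hvs j Pj).
Qed.

Lemma connect_ind (T : finType) (e : rel T) (P : T -> Prop) :
  (forall u w, e u w -> P u -> P w) -> forall x y, connect e x y -> P x -> P y.
Proof.
move=> H x y /connectP [p pth ->]; elim: p x pth => [//|z p IH] x /= /andP [exz pz] Px.
exact: IH pz (H _ _ exz Px).
Qed.

End Basic.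

Section Main.
Variables (V : vectType Cfield) (br : V -> V -> V)
  (I : {vspace V}) (m n : nat)
  (g : 'I_m -> {vspace V}) (Ik : 'I_n -> {vspace V}).
Hypotheses (Hb : bilinear_br br) (Hl : leibniz_identity br) (Hsq : is_square_span br I)
  (Hsimp : forall i, simple_Lie_subalgebra br (g i))
  (Hgg : forall i j, i != j -> forall x y, x \in g i -> y \in g j -> br x y = 0)
  (HG : subalgebra br (\sum_(i < m) g i)%VS)
  (Hfull : ((\sum_(i < m) g i) + I)%VS = fullv)
  (HdG : directv (\sum_(i < m) g i)) (HdGI : directv ((\sum_(i < m) g i) + I))
  (HdI : directv (\sum_(k < n) Ik k))
  (HIsum : (\sum_(k < n) Ik k)%VS = I)
  (Hmod : forall k, simple_right_module br (\sum_(i < m) g i)%VS (Ik k)).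

Let G := (\sum_(i < m) g i)%VS.
Let e := BGamma_edge br g Ik.
Definition sp (v : 'I_n + 'I_m) := match v with inl k => Ik k | inr i => g i end.

Lemma LI x z : z \in I -> br x z = 0.
Proof.
have sub : (I <= lker (linfun (brR Hb x)))%VS.
  apply: (proj2 Hsq) => y; rewrite memv_ker lfunE /brR.
  have := Hl x y y; rewrite -{1}[br (br x y) y]addr0 => /addrI H; exact/eqP/esym/H.
by move=> Hz; apply/eqP; move: (subvP sub z Hz); rewrite memv_ker lfunE.
Qed.

Lemma Ik_I k : (Ik k <= I)%VS.
Proof. by rewrite -HIsum; apply: (sumv_sup k). Qed.

Lemma g_G i : (g i <= G)%VS.
Proof. by apply: (sumv_sup i). Qed.

Lemma Ik0 k x z : z \in Ik k -> br x z = 0.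
Proof. by move=> Hz; apply: LI; apply: (subvP (Ik_I k)). Qed.

Lemma Hfull' : fullv = (\sum_(i < m) g i + \sum_(k < n) Ik k)%VS.
Proof. by rewrite HIsum Hfull. Qed.

Lemma AD_elim (P : pred 'I_m) (Q : pred 'I_n) (f : V -> V) (S : {vspace V}) :
  f 0 = 0 -> {morph f : a b / a + b} ->
  (forall j, P j -> forall z, z \in g j -> f z \in S) ->
  (forall k, Q k -> forall z, z \in Ik k -> f z \in S) ->
  forall z, z \in (\sum_(i < m | P i) g i + \sum_(k < n | Q k) Ik k)%VS -> f z \in S.
Proof.
move=> f0 fD H1 H2; apply: add_closed => //; apply: sum_closed => //.
Qed.

Lemma full_elim (f : V -> V) (S : {vspace V}) :
  f 0 = 0 -> {morph f : a b / a + b} ->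
  (forall j z, z \in g j -> f z \in S) ->
  (forall k z, z \in Ik k -> f z \in S) ->
  forall z, f z \in S.
Proof.
move=> f0 fD H1 H2 z; have : z \in fullv by rewrite memvf.
by rewrite Hfull'; apply: (AD_elim (P := predT) (Q := predT)) => // ? _; [apply: H1|apply: H2].
Qed.

Lemma gS i a z : a \in g i -> br a z \in g i.
Proof.
move=> Ha; apply: (full_elim (f := br a)) z.
- exact: br0r.
- by move=> x y; rewrite br_addr.
- move=> j z Hz; case: (eqVneq i j) Hz => [<-|ne] Hz.
    by case: (Hsimp i) => H _ _ _; apply: H.
  by rewrite (Hgg ne Ha Hz) rpred0.
- by move=> k z Hz; rewrite (Ik0 _ Hz) rpred0.
Qed.

Lemma modk k x y : x \in Ik k -> y \in G -> br x y \in Ik k.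
Proof. by case: (Hmod k) => _ H _; apply: H. Qed.

Lemma brsp_dich k i : brsp br (Ik k) (g i) = 0%VS \/ brsp br (Ik k) (g i) = Ik k.
Proof.
case: (Hmod k) => _ _ H; apply: H.
  apply: brsp_sub => // a b Ha Hb'; apply: modk => //; exact: (subvP (g_G i)).
move=> x y Hx Hy; move: Hx; rewrite /brsp.
set s := [seq br a b | a <- (vbasis (Ik k) : seq V), b <- (vbasis (g i) : seq V)].
move=> Hx; rewrite (@coord_span _ _ _ (in_tuple s) x Hx).
rewrite (big_morph (br ^~ y) (fun a b => br_addl Hb a b y) (br0l Hb y)).
apply: rpred_sum => t _; rewrite br_scalel //; apply: rpredZ.
have : (in_tuple s)`_t \in s by apply: mem_nth; exact: ltn_ord.
case/allpairsP => [[a b] [/= Ha Hb' ->]].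
have Ha' := vbasis_mem Ha; have Hb'' := vbasis_mem Hb'.
rewrite Hl; apply: rpredD; apply: brsp_mem => //; first exact: modk.
exact: gS.
Qed.

Lemma no_edge_zero k i a b : ~~ e (inl k) (inr i) -> a \in Ik k -> b \in g i -> br a b = 0.
Proof.
rewrite /e /= => ne Ha Hb'; case: (brsp_dich k i) => H; last by rewrite H eqxx in ne.
by apply/eqP; rewrite -memv0 -H; apply: brsp_mem.
Qed.

Lemma sp_nz v : sp v != 0%VS.
Proof.
case: v => [k|i] /=; first by case: (Hmod k).
case: (Hsimp i) => _ _ [x [y [Hx _ Hxy]]] _; apply/eqP => H0.
move: Hx Hxy; rewrite H0 memv0 => /eqP ->; by rewrite br0l // eqxx.
Qed.


Lemma ord_abs p (i : 'I_p) : p = 0 -> False.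
Proof. by move=> E; case: i => x; rewrite E. Qed.

Lemma e_sym u w : e u w = e w u.
Proof. by case: u; case: w. Qed.

Lemma gside B B' : ideal br B -> ideal br B' -> (B :&: B' = 0)%VS -> (B + B')%VS = fullv ->
  forall i, (g i <= B)%VS \/ (g i <= B')%VS.
Proof.
move=> IB IB' c0 Hf i.
case: (Hsimp i) => Hsub Hsq0 [a [b [Ha Hb' Hab]]] Hid.
have idl : forall C, ideal br C -> ideal_in br (g i) (g i :&: C)%VS.
  move=> C IC; split; first exact: capvSl.
  move=> x y Hx /memv_capP [Hy1 Hy2].
  case/andP: (IC x y Hy2) => h1 h2; by rewrite !memv_cap h1 h2 !Hsub.
case: (Hid _ (idl B IB)) => [h1|h1]; last by left; rewrite -h1 capvSr.
case: (Hid _ (idl B' IB')) => [h2|h2]; last by right; rewrite -h2 capvSr.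
exfalso; move: Hab; apply/negP; rewrite negbK.
have : b \in (B + B')%VS by rewrite Hf memvf.
case/memv_addP => b1 Hb1 [b2 Hb2 ->]; rewrite br_addr //.
have e1 : br a b1 = 0.
  apply/eqP; rewrite -memv0 -h1 memv_cap gS //.
  by case/andP: (IB a b1 Hb1).
have e2 : br a b2 = 0.
  apply/eqP; rewrite -memv0 -h2 memv_cap gS //.
  by case/andP: (IB' a b2 Hb2).
by rewrite e1 e2 addr0.
Qed.

Lemma propag B B' : ideal br B -> ideal br B' -> (B :&: B' = 0)%VS -> (B + B')%VS = fullv ->
  forall u w, e u w -> (sp u <= B)%VS -> (sp w <= B)%VS.
Proof.
move=> IB IB' c0 Hf [k|i] [k'|i'] //= /eqP He Hsub.
  case: (gside IB IB' c0 Hf i') => // Hg'; exfalso.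
  have : (Ik k <= B')%VS.
    rewrite -He; apply: brsp_sub => a b _ Hbb.
    by case/andP: (IB' a b (subvP Hg' b Hbb)).
  move=> H2; have : (Ik k <= 0)%VS by rewrite -c0 subv_cap Hsub H2.
  by rewrite subv0; apply/negP; exact: (sp_nz (inl k)).
rewrite -He; apply: brsp_sub => a b _ Hbb.
by case/andP: (IB a b (subvP Hsub b Hbb)).
Qed.

Lemma finish B B' : (forall x y, connect e x y) ->
  (forall u w, e u w -> (sp u <= B)%VS -> (sp w <= B)%VS) ->
  forall v0, (sp v0 <= B)%VS -> (B :&: B' = 0)%VS -> B' != 0%VS -> False.
Proof.
move=> Hc Hp v0 H0 c0 nz.
have all : forall v, (sp v <= B)%VS.
  by move=> v; apply: (connect_ind (P := fun v => (sp v <= B)%VS)) (Hc v0 v) H0.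
have fB : (fullv <= B)%VS.
  rewrite Hfull' subv_add; apply/andP; split; apply/subv_sumP => x _;
    [exact: (all (inr x)) | exact: (all (inl x))].
move/negP: nz; apply; rewrite -subv0 -c0 subv_cap subvv andbT.
exact: subv_trans (subvf B') fB.
Qed.

Lemma conn_indec : graph_connected e -> indecomposable br.
Proof.
move=> Hc [A1 [A2 [[HA1 HA2] nz1 nz2 Hd Hs]]].
have c0 : (A1 :&: A2 = 0)%VS by apply/directv_addP.
have c0' : (A2 :&: A1 = 0)%VS by rewrite capvC.
have Hs' : (A2 + A1 = fullv)%VS by rewrite addvC.
have [m0|mpos] := posnP m.
  have G0 : (\sum_(i < m) g i = 0)%VS.
    apply/eqP; rewrite -subv0; apply/subv_sumP => i _.
    by case: (ord_abs i m0).
  have [n0|npos] := posnP n.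
    move/negP: nz1; apply; rewrite -subv0; apply: subv_trans (subvf A1) _.
    rewrite Hfull' G0 add0v; apply/subv_sumP => k _.
    by case: (ord_abs k n0).
  pose k0 := Ordinal npos.
  have Hk : forall k, k = k0.
    move=> k; move: (Hc (inl k0) (inl k)) => /connectP [[|z p] /= pth ee].
      by case: ee.
    move: pth ee; case: z => [k'|i] //= _ _.
    by case: (ord_abs i m0).
  have sub1 : (A1 <= Ik k0)%VS.
    apply: subv_trans (subvf A1) _.
    rewrite Hfull' G0 add0v; apply/subv_sumP => k _.
    by rewrite (Hk k).
  case: (Hmod k0) => _ _ Hm.
  case: (Hm A1 sub1).
  - move=> x y Hx; rewrite G0 memv0 => /eqP ->; by rewrite br0r // rpred0.
  - by move=> h; rewrite h eqxx in nz1.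
  move=> h; apply: (finish (B := A1) (B' := A2) Hc (propag HA1 HA2 c0 Hs) (v0 := inl k0)) => //=.
  by rewrite h.
pose i0 := Ordinal mpos.
case: (gside HA1 HA2 c0 Hs i0) => h.
  exact: (finish (B := A1) (B' := A2) Hc (propag HA1 HA2 c0 Hs) (v0 := inr i0)).
exact: (finish (B := A2) (B' := A1) Hc (propag HA2 HA1 c0' Hs') (v0 := inr i0)).
Qed.


Definition AD (D : pred ('I_n + 'I_m)) :=
  (\sum_(i < m | D (inr i)) g i + \sum_(k < n | D (inl k)) Ik k)%VS.

Lemma spAD (D : pred ('I_n + 'I_m)) v : D v -> (sp v <= AD D)%VS.
Proof.
case: v => [k|i] /= h.
  by apply: subv_trans (addvSr _ _); apply: (sumv_sup k).
by apply: subv_trans (addvSl _ _); apply: (sumv_sup i).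
Qed.

Lemma AD_ideal (D : pred ('I_n + 'I_m)) : (forall u w, e u w -> D u = D w) -> ideal br (AD D).
Proof.
move=> HD x y Hy; apply/andP; split.
- move: y Hy; apply: (AD_elim (f := br x)).
  + exact: br0r.
  + by move=> a b; rewrite br_addr.
  + move=> j Dj z Hz; apply: (full_elim (f := br ^~ z)) x.
    * exact: br0l.
    * by move=> a b; rewrite br_addl.
    * move=> j' w Hw; case: (eqVneq j' j) Hw => [->|ne] Hw.
        apply: (subvP (spAD (v := inr j) Dj)).
        by case: (Hsimp j) => H _ _ _; apply: H.
      by rewrite (Hgg ne Hw Hz) rpred0.
    * move=> k w Hw; case: (boolP (D (inl k))) => Dk.
        apply: (subvP (spAD (v := inl k) Dk)); apply: modk => //.
        exact: (subvP (g_G j)).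
      rewrite (no_edge_zero _ Hw Hz) ?rpred0 //; apply/negP => E.
      by move: (HD _ _ E); rewrite Dj; move/negbTE: Dk => ->.
  + by move=> k Dk z Hz; rewrite (Ik0 _ Hz) rpred0.
- move: y Hy; apply: (AD_elim (f := br ^~ x)).
  + exact: br0l.
  + by move=> a b; rewrite br_addl.
  + move=> j Dj z Hz; apply: (full_elim (f := br z)) x.
    * exact: br0r.
    * by move=> a b; rewrite br_addr.
    * move=> j' w Hw; case: (eqVneq j j') Hw => [<-|ne] Hw.
        apply: (subvP (spAD (v := inr j) Dj)).
        by case: (Hsimp j) => H _ _ _; apply: H.
      by rewrite (Hgg ne Hz Hw) rpred0.
    * by move=> k w Hw; rewrite (Ik0 _ Hw) rpred0.
  + move=> k Dk z Hz; apply: (full_elim (f := br z)) x.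
    * exact: br0r.
    * by move=> a b; rewrite br_addr.
    * move=> j w Hw; apply: (subvP (spAD (v := inl k) Dk)); apply: modk => //.
      exact: (subvP (g_G j)).
    * by move=> k' w Hw; rewrite (Ik0 _ Hw) rpred0.
Qed.

Lemma dimAD (D : pred ('I_n + 'I_m)) : (\dim (AD D) <= \sum_(i < m | D (inr i)) \dim (g i) + \sum_(k < n | D (inl k)) \dim (Ik k))%N.
Proof.
apply: leq_trans (dimv_add_leqif _ _) _; apply: leq_add; apply: dimv_leq_sum.
Qed.

Lemma disc_dec : indecomposable br -> graph_connected e.
Proof.
move=> Hind.
suff : [forall x, [forall y, connect e x y]].
  by move/forallP => H x y; exact: (forallP (H x)).
apply/negPn/negP => /forallPn [x0] /forallPn [y0] Hxy.
apply: Hind.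
pose D := connect e x0. pose Dn := fun v => ~~ D v.
have HD : forall u w, e u w -> D u = D w.
  move=> u w E; apply/idP/idP => h.
    exact: connect_trans h (connect1 E).
  by apply: connect_trans h (connect1 _); rewrite e_sym.
have HDn : forall u w, e u w -> Dn u = Dn w by move=> u w E; rewrite /Dn (HD _ _ E).
exists (AD D), (AD Dn).
have Hsum : (AD D + AD Dn)%VS = fullv.
  apply/eqP; rewrite eqEsubv subvf /= Hfull' subv_add; apply/andP; split; apply/subv_sumP => x _.
    case: (boolP (D (inr x))) => h;
      [apply: subv_trans (addvSl _ _) | apply: subv_trans (addvSr _ _)];
      exact: (spAD (v := inr x)).
  case: (boolP (D (inl x))) => h;
    [apply: subv_trans (addvSl _ _) | apply: subv_trans (addvSr _ _)];
    exact: (spAD (v := inl x)).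
split => //.
- split; [exact: AD_ideal | exact: AD_ideal].
- apply/negP => /eqP h; move: (spAD (v := x0) (D := D) (connect0 e x0)).
  by rewrite h subv0; apply/negP; exact: sp_nz.
- apply/negP => /eqP h; move: (spAD (v := y0) (D := Dn) Hxy).
  by rewrite h subv0; apply/negP; exact: sp_nz.
have dG : \dim (\sum_(i < m) g i) = (\sum_(i < m) \dim (g i))%N by apply/directvP.
have dI : \dim I = (\sum_(k < n) \dim (Ik k))%N by rewrite -HIsum; apply/directvP.
have dF : \dim (fullv : {vspace V}) = (\sum_(i < m) \dim (g i) + \dim I)%N.
  by rewrite -Hfull; move/directvP: HdGI.
rewrite (bigID (fun i => D (inr i))) /= in dF.
rewrite [in RHS](bigID (fun k => D (inl k))) /= in dI.
have h1 := dimAD D; have h2 := dimAD Dn.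
rewrite directvEgeq /= Hsum dF dI.
rewrite /Dn in h2 *.
apply: leq_trans (leq_add h1 h2) _; by rewrite addnACA.
Qed.

Lemma main_iff : indecomposable br <-> graph_connected e.
Proof. split; [exact: disc_dec | exact: conn_indec]. Qed.

End Main.

Theorem theorem3p5 (V : vectType Cfield) (br : V -> V -> V)
  (I : {vspace V}) (m n : nat)
  (g : 'I_m -> {vspace V}) (Ik : 'I_n -> {vspace V}) :
  bilinear_br br ->
  leibniz_identity br ->
  is_square_span br I ->
  (forall i, simple_Lie_subalgebra br (g i)) ->
  (forall i j, i != j -> forall x y, x \in g i -> y \in g j -> br x y = 0) ->
  directv (\sum_(i < m) g i) ->
  subalgebra br (\sum_(i < m) g i)%VS ->
  directv ((\sum_(i < m) g i) + I) ->
  ((\sum_(i < m) g i) + I)%VS = fullv ->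
  directv (\sum_(k < n) Ik k) ->
  (\sum_(k < n) Ik k)%VS = I ->
  (forall k, simple_right_module br (\sum_(i < m) g i)%VS (Ik k)) ->
  (indecomposable br <-> graph_connected (BGamma_edge br g Ik)).
Proof.
move=> Hb Hl Hsq Hsimp Hgg HdG HG HdGI Hfull HdI HIsum Hmod.
exact: (main_iff Hb Hl Hsq Hsimp Hgg Hfull HdG HdGI HdI HIsum Hmod).
Qed.
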